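(* Let $N \ge 1$ and $M \ge 1$ be integers, and let $\mathcal{N}_0 > 0$, $\xi \ge 1$ and $P_{const} > 0$ be real constants. For a transmit power $P \ge 0$ define \[ \eta_{MRT}^\circ(P) = \frac{N \log\left(1 + \dfrac{M P}{(N-1)P + N\mathcal{N}_0}\right)}{\xi P + P_{const}} \quad\text{and}\quad \eta_{LB}(P) = \frac{N M P}{(\xi P + P_{const})\{(N + M -1) P + N\mathcal{N}_0\}}. \] Then $\eta_{LB}(P) \le \eta_{MRT}^\circ(P)$ for all $P \ge 0$, i.e. $\eta_{LB}$ is a lower bound of $\eta_{MRT}^\circ$. Moreover, the saturation power $P_{LB}$ corresponding to $\eta_{LB}$, i.e. the power $P > 0$ at which $\eta_{LB}(P)$ is maximized, is \[ P_{LB} = \sqrt{\frac{N \mathcal{N}_0 P_{const}}{\xi(N + M -1)}}. \]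
   Context: Here $\log$ denotes the natural logarithm. In the paper's model, $\eta_{MRT}^\circ$ is the large-system (deterministic) energy efficiency of maximal ratio transmission beamforming with equal power allocation in a multi-user MISO downlink with $M$ base-station antennas and $N$ single-antenna users: $P$ is the total transmit power, $\mathcal{N}_0$ the normalized noise power, $\xi$ the power amplifier inefficiency and $P_{const}$ the constant (circuit plus static) power consumption. *)

(* Defs.v *)
From Stdlib Require Import Reals.
Open Scope R_scope.

Definition eta_MRT (N M : nat) (N0 xi Pconst P : R) : R :=
  INR N * ln (1 + INR M * P / ((INR N - 1) * P + INR N * N0)) / (xi * P + Pconst).

Definition eta_LB (N M : nat) (N0 xi Pconst P : R) : R :=
  INR N * INR M * P /
  ((xi * P + Pconst) * ((INR N + INR M - 1) * P + INR N * N0)).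

Definition P_LB (N M : nat) (N0 xi Pconst : R) : R :=
  sqrt (INR N * N0 * Pconst / (xi * (INR N + INR M - 1))).

(* Main.v *)
Require Import Defs.
From Stdlib Require Import Reals Lra Psatz.
Open Scope R_scope.

Lemma ln_lb (x : R) : 0 <= x -> x / (1 + x) <= ln (1 + x).
Proof.
  intros Hx.
  set (y := Rinv (1 + x)).
  assert (Hy : 0 < y) by (unfold y; apply Rinv_0_lt_compat; lra).
  assert (H1 : ln y <= y - 1).
  { rewrite <- (ln_exp (y - 1)). pose proof (exp_ineq1_le (y - 1)) as He.
    destruct (Rle_lt_or_eq_dec y (exp (y - 1))) as [Hl|Hl]; [lra| |].
    - left. apply ln_increasing; assumption.
    - rewrite <- Hl. lra. }
  assert (H2 : ln y = - ln (1 + x)) by (unfold y; rewrite ln_Rinv; lra).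
  assert (H3 : x / (1 + x) = 1 - y) by (unfold y; field; lra).
  lra.
Qed.

Lemma div_lt (a b c d : R) : 0 < b -> 0 < d -> a * d < c * b -> a / b < c / d.
Proof.
  intros Hb Hd H.
  apply (Rmult_lt_reg_r (b * d)); [nra|].
  replace (a / b * (b * d)) with (a * d) by (field; lra).
  replace (c / d * (b * d)) with (c * b) by (field; lra).
  exact H.
Qed.

Theorem theorem1 (N M : nat) (N0 xi Pconst : R) :
  (1 <= N)%nat -> (1 <= M)%nat -> 0 < N0 -> 1 <= xi -> 0 < Pconst ->
  (forall P : R, 0 <= P -> eta_LB N M N0 xi Pconst P <= eta_MRT N M N0 xi Pconst P) /\
  (0 < P_LB N M N0 xi Pconst /\
   forall P : R, 0 < P -> P <> P_LB N M N0 xi Pconst ->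
     eta_LB N M N0 xi Pconst P < eta_LB N M N0 xi Pconst (P_LB N M N0 xi Pconst)).
Proof.
  intros HN HM HN0 Hxi HPc.
  assert (hN : 1 <= INR N) by (apply (le_INR 1 N) in HN; simpl in HN; lra).
  assert (hM : 1 <= INR M) by (apply (le_INR 1 M) in HM; simpl in HM; lra).
  split.
  - intros P HP. unfold eta_LB, eta_MRT.
    set (D := (INR N - 1) * P + INR N * N0).
    assert (HD : 0 < D) by (unfold D; nra).
    set (x := INR M * P / D).
    assert (Hx : 0 <= x) by (unfold x; apply Rmult_le_pos; [nra| left; apply Rinv_0_lt_compat; lra]).
    pose proof (ln_lb x Hx) as Hl.
    assert (Ht : x / (1 + x) = INR M * P / ((INR N + INR M - 1) * P + INR N * N0)).
    { unfold x, D. field. split; nra. }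
    rewrite Ht in Hl.
    assert (HE : 0 < xi * P + Pconst) by nra.
    replace (INR N * INR M * P / ((xi * P + Pconst) * ((INR N + INR M - 1) * P + INR N * N0)))
      with (INR N * (INR M * P / ((INR N + INR M - 1) * P + INR N * N0)) / (xi * P + Pconst))
      by (field; split; nra).
    unfold Rdiv at 1 3. apply Rmult_le_compat_r; [left; apply Rinv_0_lt_compat; lra|].
    apply Rmult_le_compat_l; lra.
  - set (a := xi). set (b := Pconst). set (c := INR N + INR M - 1). set (d := INR N * N0).
    assert (Ha : 0 < a) by (unfold a; lra).
    assert (Hc : 0 < c) by (unfold c; lra).
    assert (Hd : 0 < d) by (unfold d; nra).
    assert (Hb : 0 < b) by (unfold b; lra).
    assert (Hq : 0 < d * b / (a * c)).
    { apply Rmult_lt_0_compat; [nra| apply Rinv_0_lt_compat; nra]. }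
    assert (Hs : 0 < P_LB N M N0 xi Pconst).
    { unfold P_LB. apply sqrt_lt_R0. fold a b c d.
      replace (INR N * N0 * Pconst / (xi * (INR N + INR M - 1))) with (d * b / (a * c)) by
        (unfold a, b, c, d; reflexivity). exact Hq. }
    split; [exact Hs|].
    set (s := P_LB N M N0 xi Pconst) in *.
    assert (Hss : a * c * (s * s) = b * d).
    { unfold s, P_LB. rewrite sqrt_sqrt.
      - fold a b c d. replace (INR N * N0 * Pconst / (xi * (INR N + INR M - 1))) with (d * b / (a * c)) by
          (unfold a, b, c, d; reflexivity). field. split; lra.
      - replace (INR N * N0 * Pconst / (xi * (INR N + INR M - 1))) with (d * b / (a * c)) by
          (unfold a, b, c, d; reflexivity). lra. }
    intros P HP Hne. unfold eta_LB. fold a b c d.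
    change (P_LB N M N0 a b) with s in *.
    apply div_lt; [apply Rmult_lt_0_compat; nra|apply Rmult_lt_0_compat; nra|].
    assert (Hne' : 0 < (P - s) * (P - s)).
    { assert (P - s <> 0) by lra. nra. }
    assert (HK : 0 < INR N * INR M) by nra.
    assert (E : INR N * INR M * P * ((a * s + b) * (c * s + d))
                - INR N * INR M * s * ((a * P + b) * (c * P + d))
              = INR N * INR M * (- (a * c * s) * ((P - s) * (P - s)))).
    { transitivity (INR N * INR M * (P * (a*c*(s*s)) + P*(a*d+b*c)*s + P*(b*d)
                     - s*(a*c*P*P) - s*P*(a*d+b*c) - s*(b*d))); [ring|].
      rewrite <- Hss. ring. }
    assert (0 < INR N * INR M * (a * c * s * ((P - s) * (P - s)))).
    { apply Rmult_lt_0_compat; [exact HK|]. apply Rmult_lt_0_compat; [|exact Hne']. nra. }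
    nra.
Qed.
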